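(* With notation as in the context, suppose the edge localization graph $\bar{\mathcal{G}}$ has an oriented spanning tree with root $r$, and $r$ knows the bearing vector $\mathbf{g}_{v_1 r}$ to one of its neighbors $v_1$ in $\bar{\mathcal{G}}$. Let $l$ be the edge agent corresponding to the edge $(r,v_1)\in\bar{\mathcal{E}}$, and run the estimation dynamics $\dot{\hat z}_k(t)=\sum_{j\in\mathcal{N}_k}\bigl(e^{-\mathrm{i}\theta_{jk}}\hat z_j(t)-\hat z_k(t)\bigr)$ for all $k\neq l$, while the edge agent $l$ does not update, i.e. $\hat z_l(t)=z_l$ for all $t\ge t_0$ (the other initial estimates $\hat z_k(t_0)$ being arbitrary). Then the estimate $\hat{\mathbf{z}}(t)=[\hat z_1(t),\dots,\hat z_M(t)]^T$ converges exponentially to the true value $\mathbf{z}$.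
   Context: Setting. There are $N$ agents $\mathcal{V}=\{1,\dots,N\}$ at distinct positions $\mathbf{p}_u\in\mathbb{R}^2$. The bearing vector is $\mathbf{g}_{vu}=(\mathbf{p}_v-\mathbf{p}_u)/\|\mathbf{p}_v-\mathbf{p}_u\|$ and $\angle\mathbf{g}_{vu}\in[-\pi,\pi)$ its angle in a fixed global frame. For distinct agents $u,v,w$, $\alpha^{u}_{wv}\in[-\pi,\pi)$ denotes the counterclockwise angle at $u$ from $\mathbf{g}_{vu}$ to $\mathbf{g}_{wu}$. A set $\mathcal{S}$ of measured subtended angles is given, with $\alpha^{u}_{wv}\in\mathcal{S}$ iff $\alpha^{u}_{vw}\in\mathcal{S}$. Standing assumption: if an agent measures subtended angles between two or more pairs of other agents, all bearing vectors associated with these measurements are related to each other through them (so that the subtended angle at that agent between any two of these agents is determined by its measurements). The communication graph $\mathcal{G}=(\mathcal{V},\mathcal{E})$ has as edges exactly the ordered pairs $(u,v),(v,u),(u,w),(w,u)$ for all $\alpha^{u}_{wv}\in\mathcal{S}$; it is symmetric and assumed connected. Edge localization graph $\bar{\mathcal{G}}=(\bar{\mathcal{V}},\bar{\mathcal{E}})$: for each $(u,v)\in\mathcal{E}$ with no $w$ such that $\alpha^{v}_{wu}\in\mathcal{S}$, introduce a new virtual vertex $\bar v^{u}$ (distinct for distinct such pairs), co-located with agent $v$; $\bar{\mathcal{E}}$ is obtained from $\mathcal{E}$ by replacing each such pair $(u,v),(v,u)$ by $(u,\bar v^{u}),(\bar v^{u},u)$; $\bar{\mathcal{V}}$ consists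 of the agents that measure at least one subtended angle together with all virtual vertices. For $a\in\bar{\mathcal{V}}$ let $\rho(a)$ be the real agent it is (co-located with): $\rho(\bar v^u)=v$, $\rho(v)=v$; bearing vectors involving virtual vertices are those of the corresponding real agents. The directed line graph $L(\bar{\mathcal{G}})$ has vertex set $\bar{\mathcal{E}}$ and an edge $(e_1,e_2)$ whenever the head of $e_1$ equals the tail of $e_2$. The localization interaction graph $\mathcal{G}'=(\mathcal{V}',\mathcal{E}')$ is $L(\bar{\mathcal{G}})$ with vertices relabelled by a bijection onto $\mathcal{V}'=\{1,\dots,M\}$, $M=|\bar{\mathcal{E}}|$; vertex $k$ corresponding to $(a,b)\in\bar{\mathcal{E}}$ is the edge agent $k$; its neighbor set is $\mathcal{N}_k=\{j:(k,j)\in\mathcal{E}'\}$. For edge agent $k$ corresponding to $(a,b)$ set $\theta_k=\angle\mathbf{g}_{\rho(b)\rho(a)}$ and $z_k=e^{\mathrm{i}\theta_k}$, $\mathbf{z}=[z_1,\dots,z_M]^T$. For $j\in\mathcal{N}_k$ with $j$ corresponding to $(b,c)$, write $u=\rho(a)$, $v=\rho(b)$, $w=\rho(c)$ and set $\theta_{jk}=\mathrm{PV}(\alpha^{v}_{wu}+\pi)$ if $w\neq u$ and $\theta_{jk}=-\pi$ if $w=u$, where $\mathrm{PV}(\theta)=[(\theta+\pi)\bmod 2\pi]-\pi$. An oriented spanning tree of a directed graph with root $r$ is an acyclic subgraph containing all vertices in which every vertex other than $r$ has a directed path to $r$. *)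

(* Defs.v *)
From Stdlib Require Import Reals ClassicalEpsilon.
From Coquelicot Require Import Coquelicot.
From mathcomp Require Import ssreflect ssrfun ssrbool eqtype ssrnat seq
  choice fintype fingraph.

Set Implicit Arguments.
Unset Strict Implicit.
Unset Printing Implicit Defensive.

Local Open Scope R_scope.

Definition vnorm (x : R * R) : R := sqrt (fst x * fst x + snd x * snd x).

Definition vangle (x : R * R) : R :=
  epsilon (inhabits 0%R)
    (fun th => - PI <= th < PI /\
               vnorm x * cos th = fst x /\ vnorm x * sin th = snd x).

Definition Rmod (x m : R) : R := x - m * IZR (Int_part (x / m)).

Definition PV (th : R) : R := Rmod (th + PI) (2 * PI) - PI.

Definition cis (th : R) : C := (cos th, sin th).

Section Agents.
Variable N : nat.
Variable p : 'I_N -> R * R.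

Definition bearing (v u : 'I_N) : R * R :=
  let d := (fst (p v) - fst (p u), snd (p v) - snd (p u)) in
  (fst d / vnorm d, snd d / vnorm d).

Definition bangle (v u : 'I_N) : R := vangle (bearing v u).

(* alpha^u_{wv}: counterclockwise angle at u from g_{vu} to g_{wu}, in [-pi,pi) *)
Definition alpha (u w v : 'I_N) : R := PV (bangle w u - bangle v u).

(* The measurement set S: S u w v = true  iff  alpha^u_{wv} \in S. *)
Variable S : 'I_N -> 'I_N -> 'I_N -> bool.

Definition meas (u v : 'I_N) : bool := [exists w, S u w v].

Definition commE : rel 'I_N := fun u v => meas u v || meas v u.

(* vertices: inl v = real agent v ; inr (u,v) = virtual vertex \bar v^u *)
Definition vbar := ('I_N + ('I_N * 'I_N))%type.

Definition rho (a : vbar) : 'I_N :=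
  match a with inl v => v | inr (_, v) => v end.

Definition inVbar (a : vbar) : bool :=
  match a with
  | inl v => [exists x, meas v x]
  | inr (u, v) => commE u v && ~~ meas v u
  end.

Definition ebar : rel vbar := fun a b =>
  match a, b with
  | inl u, inl v => meas u v && meas v u
  | inl u, inr (u', v) => (u' == u) && commE u v && ~~ meas v u
  | inr (u', v), inl u => (u' == u) && commE u v && ~~ meas v u
  | inr _, inr _ => false
  end.

Definition oriented_spanning_tree (T : rel vbar) (r : vbar) : Prop :=
  inVbar r /\
  (forall a b, T a b -> ebar a b) /\
  (forall a b, T a b -> ~~ connect T b a) /\
  (forall a, inVbar a -> a != r -> connect T a r).

Variable M : nat.
(* lab k = the edge of Gbar corresponding to edge agent k *)
Variable lab : 'I_M -> vbar * vbar.

Definition is_labelling : Prop :=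
  injective lab /\ (forall e, ebar e.1 e.2 <-> exists k, lab k = e).

Definition nbr (k j : 'I_M) : bool := (lab k).2 == (lab j).1.

Definition theta (k : 'I_M) : R := bangle (rho (lab k).2) (rho (lab k).1).
Definition ztrue (k : 'I_M) : C := cis (theta k).

Definition theta_rel (j k : 'I_M) : R :=
  let u := rho (lab k).1 in
  let v := rho (lab k).2 in
  let w := rho (lab j).2 in
  if w == u then - PI else PV (alpha v w u + PI).

Definition Csum (f : 'I_M -> C) (s : seq 'I_M) : C :=
  foldr (fun j acc => Cplus (f j) acc) (RtoC 0) s.

Definition est_rhs (zh : 'I_M -> C) (k : 'I_M) : C :=
  Csum (fun j => Cminus (Cmult (cis (- theta_rel j k)) (zh j)) (zh k))
       [seq j <- enum 'I_M | nbr k j].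

End Agents.

(* Main.v *)
Require Import Defs.
From Stdlib Require Import Reals.
From Stdlib Require Import Lra Lia ZArith Psatz ClassicalEpsilon Classical.
From Coquelicot Require Import Coquelicot.
From mathcomp Require Import ssreflect ssrfun ssrbool eqtype ssrnat seq
  choice fintype fingraph.
From mathcomp Require Import path bigop.

Set Implicit Arguments.
Unset Strict Implicit.
Local Open Scope R_scope.


Lemma cis_periodN (x : R) (n : nat) : cis (x + 2 * INR n * PI) = cis x.
Proof. by rewrite /cis cos_period sin_period. Qed.

Lemma cis_periodZ (x : R) (k : Z) : cis (x + 2 * IZR k * PI) = cis x.
Proof.
case: (Z_le_gt_dec 0 k) => Hk.
- have [n ->] : exists n, k = Z.of_nat n by exists (Z.to_nat k); rewrite Z2Nat.id.
  by rewrite -INR_IZR_INZ cis_periodN.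
- have [n Hn] : exists n, k = (- Z.of_nat n)%Z.
    by exists (Z.to_nat (- k)); rewrite Z2Nat.id; lia.
  rewrite Hn opp_IZR -INR_IZR_INZ.
  rewrite -(cis_periodN (x + 2 * - INR n * PI) n). f_equal. ring.
Qed.

Lemma PV_int th : exists m : Z, PV th = th + 2 * IZR m * PI.
Proof.
exists (- Int_part ((th + PI) / (2 * PI)))%Z.
rewrite /PV /Rmod opp_IZR. ring.
Qed.

Lemma cis_PV th : cis (PV th) = cis th.
Proof. by case: (PV_int th) => m ->; rewrite cis_periodZ. Qed.

Lemma cis_add a b : Cmult (cis a) (cis b) = cis (a + b).
Proof.
rewrite /cis /Cmult /= cos_plus sin_plus. f_equal; ring.
Qed.

Lemma cis_PI : cis PI = (-1, 0).
Proof. by rewrite /cis cos_PI sin_PI. Qed.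

Lemma cis_minus_PI a : cis (a - PI) = (- fst (cis a), - snd (cis a)).
Proof. rewrite /cis /= /Rminus cos_plus sin_plus cos_neg sin_neg cos_PI sin_PI /=.
f_equal; ring. Qed.

Lemma polar_exists (c s : R) : c * c + s * s = 1 ->
  exists th, - PI <= th < PI /\ cos th = c /\ sin th = s.
Proof.
move=> H.
have Hc : -1 <= c <= 1 by split; nra.
have Hsq : sqrt (1 - c²) = Rabs s.
  rewrite -sqrt_Rsqr_abs; f_equal; rewrite /Rsqr; lra.
have Hpi := PI_RGT_0.
case: (Rle_lt_dec 0 s) => Hs.
- case: (Req_dec c (-1)) => Hc1.
  + exists (- PI); rewrite cos_neg sin_neg cos_PI sin_PI; split; first lra.
    split; first lra. nra.
  + exists (acos c); have := acos_bound c => Hb.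
    split; last first.
      split; first exact: cos_acos.
      by rewrite sin_acos // Hsq Rabs_pos_eq.
    split; first lra.
    case: (Rle_lt_or_eq_dec _ _ (proj2 Hb)) => // He.
    exfalso; apply: Hc1; by rewrite -(cos_acos c) // He cos_PI.
- exists (- acos c); have := acos_bound c => Hb.
  split; first lra.
  rewrite cos_neg sin_neg cos_acos // sin_acos // Hsq Rabs_left //; split; lra.
Qed.

Lemma vangle_spec x : x <> (0, 0) ->
  vnorm x * cos (vangle x) = fst x /\ vnorm x * sin (vangle x) = snd x.
Proof.
move=> Hx.
rewrite /vangle.
have Hn : 0 < fst x * fst x + snd x * snd x.
  case: x Hx => a b /= Hx.
  case: (Req_dec a 0) => Ha; case: (Req_dec b 0) => Hb; try nra.
  by exfalso; apply: Hx; rewrite Ha Hb.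
set n := vnorm x.
have Hn0 : 0 < n by rewrite /n /vnorm; apply: sqrt_lt_R0.
have Hnn : n * n = fst x * fst x + snd x * snd x by rewrite /n /vnorm sqrt_sqrt; lra.
have [th [Hth [Hc Hs]]] : exists th, - PI <= th < PI /\ cos th = fst x / n /\ sin th = snd x / n.
  apply: polar_exists.
  have -> : fst x / n * (fst x / n) + snd x / n * (snd x / n) = (fst x * fst x + snd x * snd x) / (n * n) by field; lra.
  rewrite -Hnn; field; lra.
match goal with |- context [epsilon ?i ?P] => have := epsilon_spec i P end.
case.
- exists th; split => //; rewrite Hc Hs; split; field; lra.
- move=> _ H; exact: H.
Qed.

Lemma cis_PVN th : cis (- PV th) = cis (- th).
Proof.
case: (PV_int th) => m ->.
rewrite -(cis_periodZ (- th) (- m)) opp_IZR; f_equal; ring.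
Qed.

Section Geo.
Variables (N : nat) (p : 'I_N -> R * R).
Hypothesis Hp : injective p.

Lemma bearing_unit (v u : 'I_N) : u != v ->
  bearing p v u <> (0,0) /\ vnorm (bearing p v u) = 1.
Proof.
move=> Huv.
rewrite /bearing /=.
set d1 := fst (p v) - fst (p u); set d2 := snd (p v) - snd (p u).
have Hd : 0 < d1 * d1 + d2 * d2.
  case: (Req_dec d1 0) => H1; case: (Req_dec d2 0) => H2; try nra.
  exfalso; move/eqP: Huv; apply; apply: Hp.
  move: H1 H2; rewrite /d1 /d2; case: (p u) => a b; case: (p v) => c d /= ? ?.
  f_equal; lra.
have Hn : 0 < vnorm (d1, d2) by rewrite /vnorm /=; apply: sqrt_lt_R0.
have Hnn : vnorm (d1, d2) * vnorm (d1, d2) = d1 * d1 + d2 * d2.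
  by rewrite /vnorm sqrt_sqrt /=; lra.
split.
- case=> H1 H2.
  have : d1 = 0 /\ d2 = 0.
    split.
    + have := Rmult_eq_compat_r (vnorm (d1, d2)) _ _ H1.
      rewrite /Rdiv Rmult_assoc Rinv_l; lra.
    + have := Rmult_eq_compat_r (vnorm (d1, d2)) _ _ H2.
      rewrite /Rdiv Rmult_assoc Rinv_l; lra.
  nra.
- rewrite {1}/vnorm /=.
  have -> : d1 / vnorm (d1, d2) * (d1 / vnorm (d1, d2)) +
            d2 / vnorm (d1, d2) * (d2 / vnorm (d1, d2)) =
            (d1 * d1 + d2 * d2) / (vnorm (d1, d2) * vnorm (d1, d2)) by field; lra.
  by rewrite Hnn /Rdiv Rinv_r ?sqrt_1 //; lra.
Qed.

Lemma cis_bangle (v u : 'I_N) : u != v -> cis (bangle p v u) = bearing p v u.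
Proof.
move=> Huv; have [H0 H1] := bearing_unit Huv.
have [Hc Hs] := vangle_spec H0.
rewrite /cis /bangle; move: Hc Hs; rewrite H1 !Rmult_1_l => -> ->.
by case: (bearing p v u).
Qed.

Lemma bearing_swap (v u : 'I_N) :
  bearing p u v = (- fst (bearing p v u), - snd (bearing p v u)).
Proof.
rewrite /bearing /vnorm /=.
have -> : (fst (p u) - fst (p v)) * (fst (p u) - fst (p v)) +
          (snd (p u) - snd (p v)) * (snd (p u) - snd (p v)) =
          (fst (p v) - fst (p u)) * (fst (p v) - fst (p u)) +
          (snd (p v) - snd (p u)) * (snd (p v) - snd (p u)) by ring.
rewrite /Rdiv /=. f_equal; ring.
Qed.

Lemma consist (M : nat) (lab : 'I_M -> vbar N * vbar N) (k j : 'I_M) :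
  rho (lab k).1 != rho (lab k).2 -> rho (lab j).1 != rho (lab j).2 ->
  nbr lab k j ->
  Cmult (cis (- theta_rel p lab j k)) (ztrue p lab j) = ztrue p lab k.
Proof.
rewrite /nbr /theta_rel /ztrue /theta => Hk Hj /eqP Hkj.
rewrite -Hkj in Hj *.
set u := rho (lab k).1 in Hk *; set v := rho (lab k).2 in Hk Hj *;
set w := rho (lab j).2 in Hj *.
have Hvu : cis (bangle p v u) = bearing p v u by apply: cis_bangle.
have Huv : cis (bangle p u v) = bearing p u v by apply: cis_bangle; rewrite eq_sym.
case: eqP => Hwu.
- rewrite Hwu Ropp_involutive cis_PI Huv bearing_swap Hvu.
  case: (bearing p v u) => a b; rewrite /Cmult /=; f_equal; ring.
- rewrite cis_PVN /alpha.
  case: (PV_int (bangle p w v - bangle p u v)) => m ->.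
  rewrite cis_add.
  have -> : - (bangle p w v - bangle p u v + 2 * IZR m * PI + PI) + bangle p w v
           = (bangle p u v - PI) + 2 * IZR (- m) * PI by rewrite opp_IZR; ring.
  rewrite cis_periodZ cis_minus_PI Huv Hvu bearing_swap /=.
  by rewrite !Ropp_involutive.
Qed.
End Geo.


Section Graph.
Variables (N : nat) (S : 'I_N -> 'I_N -> 'I_N -> bool).
Hypothesis HSdist : forall u w v, S u w v -> [/\ u != w, u != v & w != v].

Lemma meas_neq u v : meas S u v -> u != v.
Proof. by case/existsP => w /HSdist []. Qed.

Lemma ebar_rho a b : ebar S a b -> rho a != rho b.
Proof.
case: a => [u|[u' v]]; case: b => [v'|[u'' v']] //=.
- by case/andP => /meas_neq.
- case/andP => /andP [_ ] /orP [/meas_neq //| /meas_neq]; by rewrite eq_sym.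
- case/andP => /andP [/eqP <- ] /orP [/meas_neq | /meas_neq //]; by rewrite eq_sym.
Qed.

Lemma ebar_in a b : ebar S a b -> inVbar S b.
Proof.
case: a => [u|[u' v]]; case: b => [w|[u'' v']] //=.
- by case/andP => _ H; apply/existsP; exists u.
- by case/andP => /andP [/eqP -> ->] ->.
- case/andP => /andP [_ ] /orP [H _| H /negP //]; apply/existsP; by exists v.
Qed.

Variables (M : nat) (lab : 'I_M -> vbar N * vbar N).
Hypothesis Hlab : is_labelling S lab.
Variables (r v1 : vbar N) (T : rel (vbar N)) (l : 'I_M).
Hypothesis HT : oriented_spanning_tree S T r.
Hypothesis Hl : lab l = (r, v1).

Lemma lab_ebar k : ebar S (lab k).1 (lab k).2.
Proof. by apply/(proj2 Hlab (lab k)); exists k. Qed.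

Lemma reach_l k : connect (nbr lab) k l.
Proof.
have [_ [HTe [_ HTc]]] := HT.
have Hq : forall q b k, path T b q -> last b q = r -> (lab k).2 = b ->
   connect (nbr lab) k l.
  elim=> [|c q IH] b k' /=.
  - move=> _ -> Hk; apply: connect1; by rewrite /nbr Hk Hl.
  - case/andP => Hbc Hp Hlast Hk.
    have [j Hj] : exists j, lab j = (b, c) by apply/(proj1 (proj2 Hlab (b, c))); exact: HTe.
    apply: (connect_trans (y := j)); first by apply: connect1; rewrite /nbr Hk Hj.
    by apply: (IH c) => //; rewrite Hj.
set b := (lab k).2.
case: (boolP (b == r)) => [/eqP Hb | Hb].
- by apply: (Hq [::] b) => //.
- have := HTc b (ebar_in (lab_ebar k)) Hb.
  case/connectP => q Hp Hlast.
  by apply: (Hq q b).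
Qed.

Fixpoint reachn (n : nat) (k : 'I_M) : bool :=
  (k == l) || (if n is n'.+1 then [exists j, nbr lab k j && reachn n' j] else false).

Lemma reachn_ex k : exists n, reachn n k.
Proof.
have := reach_l k; case/connectP => q.
elim: q k => [|j q IH] k /=.
- by move=> _ /= Hl0; exists 0%N; rewrite /= Hl0 eqxx.
- case/andP => Hkj Hp Hlast.
  have [n Hn] := IH j Hp Hlast.
  exists n.+1; rewrite /=; apply/orP; right; apply/existsP; exists j; by rewrite Hkj.
Qed.

Lemma depth_ex : exists d : 'I_M -> nat,
  forall k, k != l -> exists2 j, nbr lab k j & (d j < d k)%N.
Proof.
exists (fun k => ex_minn (reachn_ex k)) => k Hk.
case: ex_minnP => n Hn Hmin.
case: n Hn Hmin => [|n] /=; first by rewrite (negbTE Hk).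
rewrite (negbTE Hk) /= => /existsP [j /andP [Hkj Hj]] Hmin.
exists j => //.
case: ex_minnP => m Hm Hmin'.
by apply: leq_ltn_trans (Hmin' _ Hj) _.
Qed.
End Graph.


Lemma ball_R (a e y : R) : ball a e y -> a - e < y < a + e.
Proof.
rewrite /ball /= /AbsRing_ball /abs /minus /plus /opp /= => H.
have := Rabs_def2 _ _ H; lra.
Qed.

Lemma lim_lt {G : (R -> Prop) -> Prop} (f : R -> R) a b :
  filterlim f G (locally a) -> a < b -> G (fun y => f y < b).
Proof.
move=> H Hab; apply: (H (fun z => z < b)).
exists (mkposreal (b - a) ltac:(lra)) => y /ball_R /= ?; lra.
Qed.

Lemma lim_gt {G : (R -> Prop) -> Prop} (f : R -> R) a b :
  filterlim f G (locally a) -> b < a -> G (fun y => b < f y).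
Proof.
move=> H Hab; apply: (H (fun z => b < z)).
exists (mkposreal (a - b) ltac:(lra)) => y /ball_R /= ?; lra.
Qed.

Lemma fin_ev (M : nat) (l : 'I_M) {G : (R -> Prop) -> Prop} {FG : Filter G}
  (P : R -> 'I_M -> Prop) :
  (forall j, j != l -> G (fun y => P y j)) ->
  G (fun y => forall j, j != l -> P y j).
Proof.
move=> H.
have : forall q : seq 'I_M, G (fun y => forall j, j \in q -> j != l -> P y j).
  elim=> [|a q IH].
  - apply: (filter_imp (fun _ => True)); last exact: filter_true. by move=> y _ j.
  - case: (boolP (a == l)) => [/eqP Ha | Ha].
    + apply: filter_imp IH => y Hy j; rewrite inE => /orP [/eqP -> | Hj]; first by rewrite Ha eqxx.
      exact: Hy.
    + apply: filter_imp (filter_and _ _ IH (H a Ha)) => y [Hy Ha'] j.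
      rewrite inE => /orP [/eqP -> // | Hj]; exact: Hy.
move/(_ (enum 'I_M)) => H'.
apply: filter_imp H' => y Hy j; apply: Hy; by rewrite mem_enum.
Qed.

Lemma barrier (M : nat) (l : 'I_M) (F : R -> 'I_M -> R) (t0 : R) :
  (forall k, k != l -> F t0 k < 0) ->
  (forall k, k != l -> filterlim (fun s => F s k) (at_right t0) (locally (F t0 k))) ->
  (forall k, k != l -> forall t, t0 < t -> exists D, is_derive (fun s => F s k) t D /\
      ((forall j, j != l -> F t j <= 0) -> F t k = 0 -> D < 0)) ->
  forall t, t0 <= t -> forall k, k != l -> F t k < 0.
Proof.
move=> H0 Hc0 Hd T HtT k Hk.
apply: Rnot_le_lt => HT.
pose E := fun s => t0 <= s <= T /\
  forall s', t0 <= s' <= s -> forall j, j != l -> F s' j < 0.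
have Hb : bound E by exists T => x [[_ ?] _].
have Hne : exists x, E x.
  exists t0; split; first lra.
  move=> s' Hs' j Hj; have -> : s' = t0 by lra.
  exact: H0.
case: (completeness E Hb Hne) => s [Hub Hlub].
have Et0 : E t0.
  split; first lra.
  move=> s' Hs' j Hj; have -> : s' = t0 by lra.
  exact: H0.
have Hs0 : t0 <= s by apply: Hub.
have HsT : s <= T by apply: Hlub => x [[_ ?] _].
have Hbefore : forall s', t0 <= s' < s -> forall j, j != l -> F s' j < 0.
  move=> s' Hs' j Hj.
  case: (Rlt_dec (F s' j) 0) => // Hn; exfalso.
  have : is_upper_bound E s'.
    move=> x Ex; apply: Rnot_lt_le => Hx; apply: Hn.
    apply: (proj2 Ex) => //; lra.
  move/Hlub; lra.
have Hcont : forall j, j != l -> forall t, t0 < t ->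
    filterlim (fun s => F s j) (locally t) (locally (F t j)).
  move=> j Hj t Ht; have [D [HD _]] := Hd j Hj t Ht.
  by apply: ex_derive_continuous; exists D.
have HcR : forall j, j != l -> forall t, t0 <= t ->
    filterlim (fun s => F s j) (at_right t) (locally (F t j)).
  move=> j Hj t Ht; case: (Req_dec t t0) => [->|Hne']; first exact: Hc0.
  apply: filterlim_filter_le_1 (Hcont j Hj t ltac:(lra)).
  exact: filter_le_within.
case: (classic (forall j, j != l -> F s j < 0)) => [Hall | Hnall].
-
  case: (Req_dec s T) => [HsT' | HsT'].
    by have := Hall k Hk; rewrite HsT'; lra.
  have Hev : at_right s (fun y => forall j, j != l -> F y j < 0).
    apply: fin_ev => j Hj.
    exact: (lim_lt (HcR j Hj s Hs0) (Hall j Hj)).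
  case: Hev => eps Heps.
  pose y := s + Rmin eps (T - s) / 2.
  have Hmin1 := Rmin_l eps (T - s); have Hmin2 := Rmin_r eps (T - s).
  have Hmin0 : 0 < Rmin eps (T - s) by apply: Rmin_glb_lt; [exact: cond_pos | lra].
  have Ey : E y.
    split; first by rewrite /y; lra.
    move=> s' Hs' j Hj.
    case: (Rtotal_order s' s) => [Hlt | [Heq | Hgt]].
    + apply: Hbefore => //; lra.
    + by rewrite Heq; apply: Hall.
    + apply: Heps => //.
      rewrite /ball /= /AbsRing_ball /abs /minus /plus /opp /=.
      rewrite Rabs_pos_eq; rewrite /y in Hs'; lra.
  have := Hub y Ey; rewrite /y; lra.
-
  have [j0 Hj0] : exists j0, ~ (j0 != l -> F s j0 < 0).
    by apply: not_all_ex_not.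
  have Hj0l : j0 != l by apply: NNPP => H; apply: Hj0 => /H.
  have Hj0s : 0 <= F s j0 by apply: Rnot_lt_le => H; apply: Hj0 => _.
  have Hs0' : t0 < s.
    case: (Rle_lt_or_eq_dec _ _ Hs0) => // Heq.
    by have := H0 j0 Hj0l; rewrite Heq; lra.
  have Hle : forall j, j != l -> F s j <= 0.
    move=> j Hj; apply: Rnot_lt_le => Hpos.
    case: (lim_gt (Hcont j Hj s Hs0') Hpos) => eps Heps.
    have Hm1 := Rmax_l t0 (s - eps / 2); have Hm2 := Rmax_r t0 (s - eps / 2).
    set y := Rmax t0 (s - eps / 2) in Hm1 Hm2 *.
    have He := cond_pos eps.
    have Hys : y < s by apply: Rmax_lub_lt; lra.
    have := Hbefore y (conj Hm1 Hys) j Hj.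
    have : 0 < F y j.
      apply: Heps.
      rewrite /ball /= /AbsRing_ball /abs /minus /plus /opp /=.
      rewrite Rabs_left; lra.
    lra.
  have Hz : F s j0 = 0 by have := Hle j0 Hj0l; lra.
  have [D [HD HDn]] := Hd j0 Hj0l s Hs0'.
  have HDneg := HDn Hle Hz.
  move/is_derive_Reals: HD => HD.
  have [del Hdel] := HD (- D / 2) ltac:(lra).
  pose h := - (Rmin del (s - t0)) / 2.
  have Hmin1 := Rmin_l del (s - t0); have Hmin2 := Rmin_r del (s - t0).
  have Hmin0 : 0 < Rmin del (s - t0) by apply: Rmin_glb_lt; [exact: cond_pos | lra].
  have Hhneg : h < 0 by rewrite /h; lra.
  have Hh0 : h <> 0 by lra.
  have Hhd : Rabs h < del by rewrite /h Rabs_left; lra.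
  have := Hdel h Hh0 Hhd.
  have Hneg : F (s + h) j0 < 0 by apply: Hbefore => //; rewrite /h; lra.
  rewrite Hz Rminus_0_r => Habs.
  have Hq : 0 < F (s + h) j0 / h.
    have -> : F (s + h) j0 / h = (- F (s + h) j0) / (- h) by field.
    apply: Rdiv_lt_0_compat; lra.
  have := Rabs_def2 _ _ Habs; lra.
Qed.


Lemma pow_decr (a : R) (m n : nat) : 0 <= a <= 1 -> (m <= n)%N -> a ^ n <= a ^ m.
Proof.
move=> Ha; elim: n => [|n IH].
- by rewrite leqn0 => /eqP ->; lra.
- rewrite leq_eqVlt => /orP [/eqP -> | Hlt]; first lra.
  have := IH Hlt; rewrite /= => H.
  have : 0 <= a ^ n by apply: pow_le; lra.
  nra.
Qed.

Definition sumR {I : Type} (f : I -> R) (s : seq I) : R :=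
  foldr (fun j acc => f j + acc) 0 s.

Lemma sumR_le {I : Type} (f g : I -> R) s :
  (forall j, f j <= g j) -> sumR f s <= sumR g s.
Proof. move=> H; elim: s => [|a s IH] /=; [lra | have := H a; lra]. Qed.

Lemma sumR_bound {I : eqType} (f : I -> R) (s : seq I) (j0 : I) (B B0 : R) :
  j0 \in s -> 0 <= B -> (forall j, j \in s -> f j <= B) -> f j0 <= B0 ->
  sumR f s <= (B0 - B) + INR (size s) * B.
Proof.
move=> Hj0 HB Hall Hf0.
have Hgen : forall s', (forall j, j \in s' -> f j <= B) -> sumR f s' <= INR (size s') * B.
  elim=> [|a s' IH] H; first by rewrite /=; lra.
  rewrite (_ : sumR f (a :: s') = f a + sumR f s') // (_ : size (a :: s') = (size s').+1) // S_INR.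
  have := H a (mem_head _ _); have := IH (fun j Hj => H j (mem_behead (s := _ :: _) Hj)) => ? ?; lra.
elim: s Hj0 Hall => [|a s IH] // Hj0 Hall.
rewrite (_ : sumR f (a :: s) = f a + sumR f s) // (_ : size (a :: s) = (size s).+1) // S_INR.
case: (boolP (a == j0)) => [/eqP Ha | Ha].
- subst a; have := Hgen s (fun j Hj => Hall j (mem_behead (s := _ :: _) Hj)); lra.
- rewrite inE eq_sym (negbTE Ha) /= in Hj0.
  have := IH Hj0 (fun j Hj => Hall j (mem_behead (s := _ :: _) Hj)).
  have := Hall a (mem_head _ _); lra.
Qed.

Lemma sumR_ge0 {I : Type} (f : I -> R) s : (forall j, 0 <= f j) -> 0 <= sumR f s.
Proof. move=> H; elim: s => [|a s IH] /=; [lra | have := H a; lra]. Qed.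

Lemma sumR_mem {I : eqType} (f : I -> R) (s : seq I) (j0 : I) :
  j0 \in s -> (forall j, 0 <= f j) -> f j0 <= sumR f s.
Proof.
move=> Hj H; elim: s Hj => [|a s IH] //=.
have := sumR_ge0 s H; have := H a.
rewrite inE => ? ? /orP [/eqP <- | Hj]; first lra.
have := IH Hj; lra.
Qed.

Definition sq2 (w : C) : R := fst w * fst w + snd w * snd w.

Lemma term_bound (c zj zk hj hk : C) :
  Cmult c zj = zk -> fst c * fst c + snd c * snd c = 1 ->
  2 * (fst (Cminus hk zk) * fst (Cminus (Cmult c hj) hk) +
       snd (Cminus hk zk) * snd (Cminus (Cmult c hj) hk))
  <= sq2 (Cminus hj zj) - sq2 (Cminus hk zk).
Proof.
case: c => c1 c2; case: zj => b1 b2; case: zk => g1 g2; case: hj => a1 a2;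
case: hk => h1 h2.
rewrite /Cmult /Cminus /Cplus /Copp /sq2 /= => [[<- <-]] Hc.
set e1 := h1 - (c1 * b1 - c2 * b2); set e2 := h2 - (c1 * b2 + c2 * b1).
set f1 := c1 * (a1 - b1) - c2 * (a2 - b2); set f2 := c1 * (a2 - b2) + c2 * (a1 - b1).
have Hf : f1 * f1 + f2 * f2 = (a1 - b1) * (a1 - b1) + (a2 - b2) * (a2 - b2).
  rewrite /f1 /f2.
  have -> : (c1 * (a1 - b1) - c2 * (a2 - b2)) * (c1 * (a1 - b1) - c2 * (a2 - b2)) +
    (c1 * (a2 - b2) + c2 * (a1 - b1)) * (c1 * (a2 - b2) + c2 * (a1 - b1)) =
    (c1 * c1 + c2 * c2) * ((a1 - b1) * (a1 - b1) + (a2 - b2) * (a2 - b2)) by ring.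
  rewrite Hc; ring.
have := Rle_0_sqr (e1 - f1); have := Rle_0_sqr (e2 - f2).
move: Hf; rewrite /Rsqr /e1 /e2 /f1 /f2 => Hf H1 H2.
nra.
Qed.

Lemma cis_norm th : fst (cis th) * fst (cis th) + snd (cis th) * snd (cis th) = 1.
Proof. rewrite /cis /=; have := sin2_cos2 th; rewrite /Rsqr; lra. Qed.

Lemma rhs_bound N (p : 'I_N -> R * R) M (lab : 'I_M -> vbar N * vbar N)
  (zht : 'I_M -> C) (k : 'I_M) (L : seq 'I_M) :
  (forall j, j \in L -> Cmult (cis (- theta_rel p lab j k)) (ztrue p lab j) = ztrue p lab k) ->
  2 * (fst (Cminus (zht k) (ztrue p lab k)) *
         fst (Csum (fun j => Cminus (Cmult (cis (- theta_rel p lab j k)) (zht j)) (zht k)) L) +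
       snd (Cminus (zht k) (ztrue p lab k)) *
         snd (Csum (fun j => Cminus (Cmult (cis (- theta_rel p lab j k)) (zht j)) (zht k)) L))
  <= sumR (fun j => sq2 (Cminus (zht j) (ztrue p lab j)) - sq2 (Cminus (zht k) (ztrue p lab k))) L.
Proof.
elim: L => [|a L IH] H.
- rewrite /= /sumR /=; lra.
- have IH' := IH (fun j Hj => H j (mem_behead (s := _ :: _) Hj)).
  have Ha := term_bound (zht a) (zht k) (H a (mem_head _ _)) (cis_norm _).
  rewrite [sumR _ (a :: L)]/=.
  move: IH' Ha.
  set X := Csum _ L.
  have -> : Csum (fun j => Cminus (Cmult (cis (- theta_rel p lab j k)) (zht j)) (zht k)) (a :: L)
     = Cplus (Cminus (Cmult (cis (- theta_rel p lab a k)) (zht a)) (zht k)) X by [].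
  rewrite /Cplus /=. lra.
Qed.

Lemma deriv_comp (f : R -> C) t (v : C) : is_derive f t v ->
  is_derive (fun s => fst (f s)) t (fst v) /\ is_derive (fun s => snd (f s)) t (snd v).
Proof.
move=> H; split.
- have := filterdiff_comp _ _ _ _ H (filterdiff_linear _ (is_linear_fst (K := R_AbsRing) (U := R_NormedModule) (V := R_NormedModule))).
  move=> Hd; rewrite /is_derive; eapply filterdiff_ext_lin; [exact: (Hd _)|] => y; by case: v {H Hd}.
- have := filterdiff_comp _ _ _ _ H (filterdiff_linear _ (is_linear_snd (K := R_AbsRing) (U := R_NormedModule) (V := R_NormedModule))).
  move=> Hd; rewrite /is_derive; eapply filterdiff_ext_lin; [exact: (Hd _)|] => y; by case: v {H Hd}.
Qed.

Lemma deriv_sq2 (f : R -> C) t (v z : C) : is_derive f t v ->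
  is_derive (fun s => sq2 (Cminus (f s) z)) t
    (2 * (fst (Cminus (f t) z) * fst v + snd (Cminus (f t) z) * snd v)).
Proof.
move=> /deriv_comp [H1 H2].
have G1 := is_derive_minus _ _ _ _ _ H1 (is_derive_const (fst z) t).
have G2 := is_derive_minus _ _ _ _ _ H2 (is_derive_const (snd z) t).
have M1 := is_derive_mult _ _ _ _ _ G1 G1 Rmult_comm.
have M2 := is_derive_mult _ _ _ _ _ G2 G2 Rmult_comm.
have P := is_derive_plus _ _ _ _ _ M1 M2.
have E : forall s, sq2 (Cminus (f s) z) =
  plus (mult (minus (fst (f s)) (fst z)) (minus (fst (f s)) (fst z)))
       (mult (minus (snd (f s)) (snd z)) (minus (snd (f s)) (snd z))).
  by move=> s; rewrite /sq2 /Cminus /Cplus /Copp /plus /mult /minus /opp /=.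
have P' := is_derive_ext _ _ _ _ E P.
move: P'; congr is_derive.
rewrite /Cminus /Cplus /Copp /plus /mult /minus /opp /zero /=. rewrite /plus /=. ring.
Qed.

Section Lims.
Context {G : (R -> Prop) -> Prop} {FG : Filter G}.

Lemma lim_fst (f : R -> C) (w : C) :
  filterlim f G (locally w) -> filterlim (fun s => fst (f s)) G (locally (fst w)).
Proof.
case: w => a b H; apply: filterlim_comp H _.
exact: (continuous_fst (U := R_UniformSpace) (V := R_UniformSpace) a b).
Qed.

Lemma lim_snd (f : R -> C) (w : C) :
  filterlim f G (locally w) -> filterlim (fun s => snd (f s)) G (locally (snd w)).
Proof.
case: w => a b H; apply: filterlim_comp H _.
exact: (continuous_snd (U := R_UniformSpace) (V := R_UniformSpace) a b).
Qed.

Lemma lim_plusR (f g : R -> R) a b :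
  filterlim f G (locally a) -> filterlim g G (locally b) ->
  filterlim (fun s => f s + g s) G (locally (a + b)).
Proof.
move=> Hf Hg.
exact: (filterlim_comp_2 f g plus Hf Hg (filterlim_plus (K := R_AbsRing) (V := R_NormedModule) a b)).
Qed.

Lemma lim_multR (f g : R -> R) a b :
  filterlim f G (locally a) -> filterlim g G (locally b) ->
  filterlim (fun s => f s * g s) G (locally (a * b)).
Proof.
move=> Hf Hg.
exact: (filterlim_comp_2 f g mult Hf Hg (filterlim_mult (K := R_AbsRing) a b)).
Qed.

Lemma lim_sq2 (f : R -> C) (w z : C) :
  filterlim f G (locally w) ->
  filterlim (fun s => sq2 (Cminus (f s) z)) G (locally (sq2 (Cminus w z))).
Proof.
move=> H.
have H1 : filterlim (fun s => fst (f s) + - fst z) G (locally (fst w + - fst z)).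
  apply: lim_plusR; [exact: lim_fst | exact: filterlim_const].
have H2 : filterlim (fun s => snd (f s) + - snd z) G (locally (snd w + - snd z)).
  apply: lim_plusR; [exact: lim_snd | exact: filterlim_const].
rewrite /sq2 /Cminus /Cplus /Copp /=.
apply: lim_plusR; exact: lim_multR.
Qed.
End Lims.


Unset Implicit Arguments.

Theorem theorem4
  (N : nat) (p : 'I_N -> R * R) (S : 'I_N -> 'I_N -> 'I_N -> bool)
  (Hp : injective p)
  (HSdist : forall u w v, S u w v -> [/\ u != w, u != v & w != v])
  (HSsym : forall u w v, S u w v = S u v w)
  (Hstand : forall u v w, meas S u v -> meas S u w -> connect (S u) v w)
  (Hconn : forall u v : 'I_N, connect (commE S) u v)
  (M : nat) (lab : 'I_M -> vbar N * vbar N)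
  (Hlab : is_labelling S lab)
  (r v1 : vbar N)
  (Htree : exists T, oriented_spanning_tree S T r)
  (Hv1 : ebar S r v1)
  (l : 'I_M) (Hl : lab l = (r, v1))
  (t0 : R) (zh : R -> 'I_M -> C)
  (Hfix : forall t, t0 <= t -> zh t l = ztrue p lab l)
  (Hdyn : forall k, k != l -> forall t, t0 < t ->
            is_derive (fun s => zh s k) t (est_rhs p lab (zh t) k))
  (Hcont : forall k, k != l ->
            filterlim (fun s => zh s k) (at_right t0) (locally (zh t0 k))) :
  exists c lam : R, 0 < lam /\
    forall t, t0 <= t -> forall k : 'I_M,
      Cmod (Cminus (zh t k) (ztrue p lab k)) <= c * exp (- lam * (t - t0)).
Proof.
case: Htree => T HT.
have [d Hd] := depth_ex Hlab HT Hl.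
have HM0 : 0 <= INR M by apply: pos_INR.
pose a := / (INR M + 2).
have Ha0 : 0 < a by rewrite /a; apply: Rinv_0_lt_compat; lra.
have Ha1 : a <= / 2 by rewrite /a; apply: Rinv_le_contravar; lra.
have HaM : INR M * a - 1 = - 2 * a by rewrite /a; field; lra.
have Ha01 : 0 <= a <= 1 by lra.
pose Dm := (\max_(i : 'I_M) d i)%N.
pose mu := a ^ Dm.
have Hmu0 : 0 < mu by apply: pow_lt.
have Hmu : forall k, mu <= a ^ d k by move=> k; apply: pow_decr => //; apply: leq_bigmax.
have Hpow : forall n, 0 < a ^ n <= 1.
  move=> n; split; first exact: pow_lt.
  by have := pow_decr (m := 0) (n := n) Ha01 (leq0n _).
pose y k := 1 - a ^ d k.
have Hy01 : forall k, 0 <= y k <= 1 by move=> k; have := Hpow (d k); rewrite /y; lra.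
have Hdk : forall k, k != l -> (0 < d k)%N by move=> k /Hd [j _ Hj]; apply: leq_ltn_trans Hj.
have Hyk : forall k, k != l -> / 2 <= y k.
  move=> k /Hdk Hk; have := pow_decr (m := 1) (n := d k) Ha01 Hk; rewrite /y /=; lra.
pose e t k := Cminus (zh t k) (ztrue p lab k).
pose x t k := sq2 (e t k).
have Hx0 : forall t k, 0 <= x t k.
  by move=> t k; rewrite /x /sq2; have := Rle_0_sqr (fst (e t k)); have := Rle_0_sqr (snd (e t k)); rewrite /Rsqr; lra.
have Hxl : forall t, t0 <= t -> x t l = 0.
  move=> t Ht; rewrite /x /e Hfix //; rewrite /sq2 /Cminus /Cplus /Copp /=; ring.
pose S0 := sumR (fun k => x t0 k) (enum 'I_M).
have HS0 : forall k, x t0 k <= S0.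
  by move=> k; apply: sumR_mem; [rewrite mem_enum | move=> j; apply: Hx0].
pose c := 2 * (S0 + 1).
have Hc : 0 < c by have := HS0 l; have := Hx0 t0 l; rewrite /c; lra.
pose F t k := x t k - c * y k * exp (- mu * (t - t0)).
have Hbar : forall t, t0 <= t -> forall k, k != l -> F t k < 0.
  apply: barrier.
  - move=> k Hk; rewrite /F (_ : t0 - t0 = 0); last ring. rewrite Rmult_0_r exp_0 Rmult_1_r.
    have := HS0 k; have := Rmult_le_compat_l c _ _ (Rlt_le _ _ Hc) (Hyk k Hk).
    rewrite /c; lra.
  - move=> k Hk; rewrite /F.
    apply: lim_plusR; first exact: lim_sq2 (Hcont k Hk).
    apply: (filterlim_filter_le_1 (F := locally t0)); first exact: filter_le_within.
    apply: (ex_derive_continuous (fun s => - (c * y k * exp (- mu * (s - t0))))).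
    auto_derive; done.
  - move=> k Hk t Ht.
    set v := est_rhs p lab (zh t) k.
    exists (2 * (fst (e t k) * fst v + snd (e t k) * snd v) + mu * (c * y k * exp (- mu * (t - t0)))).
    split.
    + have Hx := deriv_sq2 (ztrue p lab k) (Hdyn k Hk t Ht).
      have HG : is_derive (fun s => c * y k * exp (- mu * (s - t0))) t
                  (- mu * (c * y k * exp (- mu * (t - t0)))).
        auto_derive; first done. rewrite /Rminus.
        have E : forall u v w z : R, u * v * (- z * 1 * w) = - z * (u * v * w) by intros; ring.
        exact: E.
      have := is_derive_minus _ _ _ _ _ Hx HG.
      rewrite /minus /plus /opp /= => H.
      have -> : 2 * (fst (e t k) * fst v + snd (e t k) * snd v) +
                mu * (c * y k * exp (- mu * (t - t0))) =
                2 * (fst (e t k) * fst v + snd (e t k) * snd v) +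
                - (- mu * (c * y k * exp (- mu * (t - t0)))) by ring.
      exact: H.
    + move=> Hle Hz.
      set E := exp (- mu * (t - t0)).
      have HE : 0 < E by apply: exp_pos.
      pose K := c * E.
      have HK : 0 < K by rewrite /K; apply: Rmult_lt_0_compat.
      have Hxk : x t k = K * y k by move: Hz; rewrite /F /K -/E; lra.
      have Hxj : forall j, x t j <= K * y j.
        move=> j; case: (eqVneq j l) => [-> | Hj].
        * rewrite Hxl; last lra. have := Hy01 l; nra.
        * by have := Hle j Hj; rewrite /F /K -/E; lra.
      set L := [seq j <- enum 'I_M | nbr lab k j].
      have Hcons : forall j, j \in L ->
          Cmult (cis (- theta_rel p lab j k)) (ztrue p lab j) = ztrue p lab k.
        move=> j; rewrite mem_filter => /andP [Hn _].
        exact: (consist Hp (ebar_rho HSdist (lab_ebar Hlab k)) (ebar_rho HSdist (lab_ebar Hlab j)) Hn).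
      have Hrb : 2 * (fst (e t k) * fst v + snd (e t k) * snd v) <=
                 sumR (fun j => x t j - x t k) L := rhs_bound (zh t) Hcons.
      case: (Hd k Hk) => j0 Hj0 Hdj0.
      have [n Hn] : exists n, d k = n.+1 by exists (d k).-1; rewrite prednK // Hdk.
      have Hj0L : j0 \in L by rewrite mem_filter Hj0 mem_enum.
      have HB : 0 <= K * a ^ d k by have := Hpow (d k); nra.
      have Hall : forall j, j \in L -> x t j - x t k <= K * a ^ d k.
        move=> j _; rewrite Hxk; have := Hxj j; have := Hpow (d j); rewrite /y; nra.
      have Hf0 : x t j0 - x t k <= K * (a ^ d k - a ^ n).
        have Hdn : (d j0 <= n)%N by rewrite -ltnS -Hn.
        have := pow_decr (m := d j0) (n := n) Ha01 Hdn.
        rewrite Hxk; have := Hxj j0; rewrite /y; nra.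
      have Hsb : sumR (fun j => x t j - x t k) L <=
          (K * (a ^ d k - a ^ n) - K * a ^ d k) + INR (size L) * (K * a ^ d k)
        := sumR_bound (f := fun j => x t j - x t k) Hj0L HB Hall Hf0.
      have Hsize : INR (size L) <= INR M.
        apply: le_INR; apply/leP; rewrite size_filter.
        by apply: leq_trans (count_size _ _) _; rewrite size_enum_ord.
      have Hpdk : a ^ d k = a * a ^ n by rewrite Hn.
      rewrite Hpdk in Hsb.
      have HP := Hpow n.
      set P := a ^ n in Hsb HP.
      have H1 : INR (size L) * (K * (a * P)) <= INR M * (K * (a * P)).
        apply: Rmult_le_compat_r => //.
        apply: Rlt_le; apply: Rmult_lt_0_compat => //; apply: Rmult_lt_0_compat => //; lra.
      have H2 : mu * (c * y k * E) <= K * (a * P).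
        rewrite -Hpdk.
        have Hm : mu * y k <= a ^ d k by have := Hmu k; have := Hy01 k; nra.
        have := Rmult_le_compat_l K _ _ (Rlt_le _ _ HK) Hm.
        have -> : mu * (c * y k * E) = K * (mu * y k) by rewrite /K; ring.
        done.
      have H3 : INR M * (K * (a * P)) = K * P * (1 - 2 * a).
        have -> : INR M * (K * (a * P)) = K * P * (INR M * a) by ring.
        by rewrite (_ : INR M * a = 1 - 2 * a) //; lra.
      have H4 : 0 < K * (a * P).
        apply: Rmult_lt_0_compat => //; apply: Rmult_lt_0_compat => //; lra.
      have H5 : K * (a * P - P) - K * (a * P) = - (K * P) by ring.
      have H6 : K * P * (1 - 2 * a) = K * P - 2 * (K * (a * P)) by ring.
      have H7 := Rle_trans _ _ _ Hrb Hsb. rewrite H5 in H7. lra.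
exists (sqrt c), (mu / 2); split; first lra.
move=> t Ht k.
have HE : 0 <= sqrt c * exp (- (mu / 2) * (t - t0)).
  apply: Rmult_le_pos; [exact: sqrt_pos | exact: Rlt_le (exp_pos _)].
case: (eqVneq k l) => [-> | Hk].
- rewrite Hfix //.
  have -> : Cminus (ztrue p lab l) (ztrue p lab l) = (0, 0).
    rewrite /Cminus /Cplus /Copp /=; f_equal; ring.
  rewrite /Cmod /=. rewrite (_ : 0 ^ 2 + 0 ^ 2 = 0); last ring.
  by rewrite sqrt_0.
- have HF := Hbar t Ht k Hk.
  have Hxk : x t k <= c * exp (- mu * (t - t0)).
    move: HF; rewrite /F => HF.
    have := Hy01 k; have := exp_pos (- mu * (t - t0)) => ? ?.
    have : c * y k * exp (- mu * (t - t0)) <= c * exp (- mu * (t - t0)).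
      apply: Rmult_le_compat_r; first lra.
      rewrite -{2}(Rmult_1_r c); apply: Rmult_le_compat_l; lra.
    lra.
  have -> : Cmod (Cminus (zh t k) (ztrue p lab k)) = sqrt (x t k).
    by rewrite /Cmod /x /sq2 /e; f_equal; ring.
  have -> : sqrt c * exp (- (mu / 2) * (t - t0)) = sqrt (c * exp (- mu * (t - t0))).
    rewrite sqrt_mult; [|lra|exact: Rlt_le (exp_pos _)].
    f_equal.
    have -> : exp (- mu * (t - t0)) = exp (- (mu / 2) * (t - t0)) * exp (- (mu / 2) * (t - t0)).
      rewrite -exp_plus; f_equal; field.
    by rewrite sqrt_square //; exact: Rlt_le (exp_pos _).
  exact: sqrt_le_1_alt.
Qed.
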